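(* Let $R$ be a finite commutative local Frobenius ring with residue field $\mathbb{F}_q$. Let $\{C_1,C_2\}$ be a pair of linear codes over $R$ of length $n$ such that $C_1+C_2=R^n$. If $\{C_1,C_2\}$ is a $0$-DLIP, then $C_1$ and $C_2$ are free.
   Context: A linear code of length $n$ over $R$ is an $R$-submodule of $R^n$; it is free if it is a free $R$-module. $\dim(C):=\log_q|C|$, and a pair $\{C,D\}$ is a $0$-DLIP if $\dim(C\cap D)=0$, i.e. $C\cap D=\{\mathbf{0}\}$. *)

(* Defs.v *)
From HB Require Import structures.
From mathcomp Require Import all_boot all_order all_algebra.
Set Implicit Arguments. Unset Strict Implicit. Unset Printing Implicit Defensive.
Import GRing.Theory.
Local Open Scope ring_scope.

Definition is_ideal (R : finComNzRingType) (I : {set R}) : Prop :=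
  0 \in I /\ (forall x y, x \in I -> y \in I -> x + y \in I)
  /\ (forall r x, x \in I -> r * x \in I).

Definition is_maximal_ideal (R : finComNzRingType) (M : {set R}) : Prop :=
  is_ideal M /\ 1 \notin M /\
  (forall J : {set R}, is_ideal J -> M \subset J -> J = M \/ J = setT).

Definition local_with_max (R : finComNzRingType) (m : {set R}) : Prop :=
  is_maximal_ideal m /\ (forall M : {set R}, is_maximal_ideal M -> M = m).

Definition is_local_ring (R : finComNzRingType) : Prop :=
  exists m : {set R}, local_with_max m.

(* socle of a local ring = annihilator of its maximal ideal *)
Definition socle (R : finComNzRingType) (m : {set R}) : {set R} :=
  [set x | [forall y in m, x * y == 0]].

(* Finite commutative local Frobenius ring: local with maximal ideal m and
   soc(R) is isomorphic, as an R-module, to R/m, i.e. there is s with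
   soc(R) = R s and Ann(s) = m (the map r + m |-> r s is an isomorphism). *)
Definition local_frobenius_ring (R : finComNzRingType) : Prop :=
  exists m : {set R}, local_with_max m /\
    exists s : R,
      (forall t, t \in socle m <-> exists r, t = r * s) /\
      (forall r, r * s = 0 <-> r \in m).

Definition linear_code (R : finComNzRingType) (n : nat) (C : {set 'rV[R]_n}) : Prop :=
  0 \in C /\ (forall u v, u \in C -> v \in C -> u + v \in C)
  /\ (forall (a : R) v, v \in C -> a *: v \in C).

Definition free_code (R : finComNzRingType) (n : nat) (C : {set 'rV[R]_n}) : Prop :=
  exists k (B : 'M[R]_(k, n)),
    (forall i, row i B \in C) /\
    (forall c, c \in C -> exists a : 'rV[R]_k, c = a *m B) /\
    (forall a : 'rV[R]_k, a *m B = 0 -> a = 0).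

Definition codes_sum_full (R : finComNzRingType) (n : nat) (C1 C2 : {set 'rV[R]_n}) : Prop :=
  forall v : 'rV[R]_n, exists c1 c2, c1 \in C1 /\ c2 \in C2 /\ v = c1 + c2.

(* 0-DLIP: dim(C1 ∩ C2) = log_q |C1 ∩ C2| = 0, i.e. C1 ∩ C2 = {0}. *)
Definition zero_DLIP (R : finComNzRingType) (n : nat) (C1 C2 : {set 'rV[R]_n}) : Prop :=
  C1 :&: C2 = [set 0].

(* Main.v *)
Require Import Defs.
From mathcomp Require Import all_boot all_order all_algebra.
From Stdlib Require Import Classical.
Set Implicit Arguments. Unset Strict Implicit. Unset Printing Implicit Defensive.
Import GRing.Theory.
Local Open Scope ring_scope.

Lemma ideal_N (R : finComNzRingType) (I : {set R}) x :
  is_ideal I -> x \in I -> - x \in I.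
Proof. by move=> [_ [_ HM]] Hx; rewrite -mulN1r; apply: HM. Qed.

Lemma ideal_B (R : finComNzRingType) (I : {set R}) x y :
  is_ideal I -> x \in I -> y \in I -> x - y \in I.
Proof. move=> HI Hx Hy; case: (HI) => [_ [HA _]]; apply: HA => //; exact: ideal_N. Qed.

Lemma ideal_Mr (R : finComNzRingType) (I : {set R}) x r :
  is_ideal I -> x \in I -> x * r \in I.
Proof. by move=> [_ [_ HM]] Hx; rewrite mulrC; apply: HM. Qed.

Lemma ideal_setT (R : finComNzRingType) (I : {set R}) :
  is_ideal I -> 1 \in I -> I = setT.
Proof.
move=> [_ [_ HM]] H1; apply/setP => x; rewrite inE.
by rewrite -(mulr1 x); apply: HM.
Qed.

Lemma exists_max (R : finComNzRingType) (I : {set R}) :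
  is_ideal I -> 1 \notin I -> exists M, is_maximal_ideal M /\ I \subset M.
Proof.
move: {2}#|~: I| (leqnn #|~: I|) => N.
elim: N I => [|N IH] I HN HI H1.
  move: HN; rewrite leqn0 cards_eq0 => /eqP HC.
  by move: H1; rewrite -in_setC HC inE.
case: (classic (is_maximal_ideal I)) => [HM|HM]; first by exists I; split.
have [J [HJ [HIJ [HJI HJT]]]] : exists J : {set R}, is_ideal J /\ I \subset J /\ J <> I /\ J <> setT.
  apply: NNPP => Hn; apply: HM; split => //; split => // J HJ HIJ.
  case: (classic (J = I)) => [->|H]; first by left.
  case: (classic (J = setT)) => [->|H']; first by right.
  by exfalso; apply: Hn; exists J.
have H1J : 1 \notin J by apply/negP => /(ideal_setT HJ).
have [M [HM1 HM2]] : exists M, is_maximal_ideal M /\ J \subset M.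
  apply: IH => //.
  have : ~: J \proper ~: I.
    rewrite properC properEneq HIJ andbT; apply/eqP => E; exact: HJI.
  move/proper_card => H; rewrite -ltnS; exact: leq_trans H HN.
by exists M; split => //; exact: subset_trans HIJ HM2.
Qed.

Lemma unit_notin (R : finComNzRingType) (m : {set R}) (x : R) :
  local_with_max m -> x \notin m -> exists u, u * x = 1.
Proof.
move=> [Hm Huniq] Hx; apply: NNPP => Hn.
pose I := [set y | [exists r, y == r * x]].
have HI : is_ideal I.
  split; first by rewrite inE; apply/existsP; exists 0; rewrite mul0r.
  split.
    move=> a b; rewrite !inE => /existsP [r /eqP ->] /existsP [s /eqP ->].
    by apply/existsP; exists (r + s); rewrite mulrDl.
  move=> r a; rewrite !inE => /existsP [s /eqP ->].
  by apply/existsP; exists (r * s); rewrite mulrA.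
have H1 : 1 \notin I.
  rewrite inE; apply/negP => /existsP [r /eqP E]; apply: Hn; by exists r.
have [M [HM HIM]] := exists_max HI H1.
have EM := Huniq M HM.
move/negP: Hx; apply; rewrite -EM; apply: (subsetP HIM).
by rewrite inE; apply/existsP; exists 1; rewrite mul1r.
Qed.

Lemma det_cong (R : finComNzRingType) (I : {set R}) k (M M' : 'M[R]_k) :
  is_ideal I -> (forall i j, M i j - M' i j \in I) -> \det M - \det M' \in I.
Proof.
move=> HI H; rewrite /determinant.
apply: (big_ind2 (fun x y => x - y \in I)).
- by rewrite subrr; case: HI.
- move=> x1 x2 y1 y2 Hx Hy; rewrite opprD addrACA; case: HI => [_ [HA _]]; exact: HA.
- move=> s _; rewrite -mulrBr; case: (HI) => [_ [_ HMM]]; apply: HMM.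
    apply: (big_ind2 (fun x y => x - y \in I)).
    + by rewrite subrr; case: HI.
    + move=> x1 x2 y1 y2 Hx Hy.
      have -> : x1 * y1 - x2 * y2 = (x1 - x2) * y1 + x2 * (y1 - y2).
        by rewrite mulrBl mulrBr addrA subrK.
      case: (HI) => [_ [HA HM]]; apply: HA; [exact: ideal_Mr | exact: HM].
    + by move=> i _; exact: H.
Qed.

Lemma code_N (R : finComNzRingType) n (C : {set 'rV[R]_n}) v :
  linear_code C -> v \in C -> - v \in C.
Proof. by move=> [_ [_ HZ]] Hv; rewrite -scaleN1r; apply: HZ. Qed.

Lemma code_B (R : finComNzRingType) n (C : {set 'rV[R]_n}) u v :
  linear_code C -> u \in C -> v \in C -> u - v \in C.
Proof. move=> HC Hu Hv; case: (HC) => [_ [HA _]]; apply: HA => //; exact: code_N. Qed.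

Lemma code_mul (R : finComNzRingType) n k (C : {set 'rV[R]_n}) (u : 'rV[R]_k) (M : 'M[R]_(k, n)) :
  linear_code C -> (forall i, row i M \in C) -> u *m M \in C.
Proof.
move=> [H0 [HA HZ]] HM; rewrite mulmx_sum_row.
apply: (big_ind (fun x => x \in C)) => //.
by move=> i _; apply: HZ.
Qed.

Lemma min_exists (P : nat -> Prop) : (exists n, P n) -> exists n, P n /\ forall m, (m < n)%N -> ~ P m.
Proof.
move=> [n Hn]; elim: n {-2}n (leqnn n) Hn => [|N IH] n Hle Hn.
  exists n; split => // m Hm; move: Hle; rewrite leqn0 => /eqP E; by rewrite E in Hm.
case: (classic (exists m, (m < n)%N /\ P m)) => [[m [Hm Pm]]|Hno].
  apply: (IH m) => //; rewrite -ltnS; exact: leq_trans Hm Hle.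
exists n; split => // m Hm Pm; apply: Hno; by exists m.
Qed.

Lemma mul_row' (R : finComNzRingType) k n (i : 'I_k) (d : 'rV[R]_k) (B : 'M[R]_(k, n)) :
  d 0 i = 0 -> d *m B = col' i d *m row' i B.
Proof.
move=> Hd; apply/rowP => j; rewrite !mxE (bigD1_ord i) //= Hd mul0r add0r.
by apply: eq_bigr => l _; rewrite !mxE.
Qed.

Lemma summand_free (R : finComNzRingType) (m : {set R}) n (C1 C2 : {set 'rV[R]_n}) :
  local_with_max m -> linear_code C1 -> linear_code C2 ->
  codes_sum_full C1 C2 -> zero_DLIP C1 C2 -> free_code C1.
Proof.
move=> Hloc HC1 HC2 Hfull Hdl.
have Hm : is_ideal m by case: Hloc => [[]].
have H1m : 1 \notin m by case: Hloc => [[_ []]].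
have [f Hf] : exists f : 'I_n -> 'rV[R]_n, forall i, f i \in C1 /\ row i 1%:M - f i \in C2.
  apply: (@fin_all_exists _ (fun _ => 'rV[R]_n) (fun i x => x \in C1 /\ row i 1%:M - x \in C2)) => i; have [c1 [c2 [H1 [H2 E]]]] := Hfull (row i 1%:M).
  by exists c1; split => //; rewrite E addrC addKr.
pose E := \matrix_(i, j) f i 0 j.
have rowE i : row i E = f i by apply/rowP => j; rewrite !mxE.
have HE1 v : v *m E \in C1 by apply: code_mul => // i; rewrite rowE; case: (Hf i).
have HE2 c : c \in C1 -> c *m E = c.
  move=> Hc; apply/eqP; rewrite -subr_eq0 -in_set1 -Hdl inE; apply/andP; split.
    by apply: code_B.
  rewrite -opprB; apply: code_N => //.
  have -> : c - c *m E = c *m (1%:M - E) by rewrite mulmxBr mulmx1.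
  by apply: code_mul => // i; rewrite linearB /= rowE; case: (Hf i).
pose P k := exists B : 'M[R]_(k, n), (forall i, row i B \in C1) /\
   (forall c, c \in C1 -> exists a : 'rV[R]_k, c = a *m B).
have [k [[B [HB1 HB2]] Hmin]] : exists k, P k /\ forall k', (k' < k)%N -> ~ P k'.
  apply: min_exists; exists n, E; split; first by move=> i; rewrite rowE; case: (Hf i).
  by move=> c Hc; exists c; rewrite HE2.
case: k B HB1 HB2 Hmin => [|k'] B HB1 HB2 Hmin.
  exists 0%N, B; split => //; split => // a _; by apply/rowP => -[].
have Hrel (c : 'rV[R]_(k'.+1)) : c *m B = 0 -> forall i, c 0 i \in m.
  move=> Hc i; apply: NNPP => /negP Hi.
  have [u Hu] := unit_notin Hloc Hi.
  apply: (Hmin k') => //.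
  exists (row' i B); split.
    move=> j; have -> : row j (row' i B) = row (lift i j) B by apply/rowP => l; rewrite !mxE.
    exact: HB1.
  move=> c' Hc'; have [a Ha] := HB2 c' Hc'.
  pose d := a - (a 0 i * u) *: c.
  have Hd : d 0 i = 0.
    by rewrite !mxE -(mulrA (a 0 i)) Hu mulr1 subrr.
  exists (col' i d); rewrite -(mul_row' B Hd) mulmxBl -scalemxAl Hc scaler0 subr0.
  exact: Ha.
have [a Ha] : exists a : 'I_n -> 'rV[R]_(k'.+1), forall i, row i E = a i *m B.
  apply: (@fin_all_exists _ (fun _ => 'rV[R]_(k'.+1)) (fun i x => row i E = x *m B)) => i.
  by apply: HB2; rewrite rowE; case: (Hf i).
pose A := \matrix_(i, j) a i 0 j.
have HEA : E = A *m B.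
  apply/row_matrixP => i; rewrite row_mul Ha; congr (_ *m _); apply/rowP => j; by rewrite !mxE.
pose Q := B *m A.
have HQB : Q *m B = B.
  rewrite -mulmxA -HEA; apply/row_matrixP => i; rewrite row_mul HE2 //.
have HQm : forall i j, (1%:M - Q) i j \in m.
  move=> i j.
  have H : row i (1%:M - Q) *m B = 0 by rewrite -row_mul mulmxBl mul1mx HQB subrr linear0.
  by have := Hrel _ H j; rewrite [row _ _ _ _]mxE.
have Hdet : \det Q - \det (1%:M : 'M[R]_(k'.+1)) \in m.
  apply: det_cong => // i j; rewrite -opprB; apply: ideal_N => //.
  by have := HQm i j; rewrite !mxE.
have HdQ : \det Q \notin m.
  apply/negP => Hin; apply/negP: H1m; rewrite -(det1 _ k'.+1).
  have -> : \det (1%:M : 'M[R]_(k'.+1)) = \det Q - (\det Q - \det (1%:M : 'M[R]_(k'.+1))) by rewrite opprB addrC subrK.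
  by rewrite negbK; exact: ideal_B.
have [u Hu] := unit_notin Hloc HdQ.
exists k'.+1, B; split => //; split => // x Hx.
have HxQ : x *m Q = 0 by rewrite mulmxA Hx mul0mx.
have HQinv : Q *m (u *: \adj Q) = 1%:M.
  by rewrite -scalemxAr mul_mx_adj scale_scalar_mx Hu.
by rewrite -(mulmx1 x) -HQinv mulmxA HxQ mul0mx.
Qed.


Theorem corollary3p17 (R : finComNzRingType) (n : nat) (C1 C2 : {set 'rV[R]_n}) :
  local_frobenius_ring R ->
  linear_code C1 -> linear_code C2 ->
  codes_sum_full C1 C2 ->
  zero_DLIP C1 C2 ->
  free_code C1 /\ free_code C2.
Proof.
move=> [m [Hloc _]] HC1 HC2 Hfull Hdl; split.
  exact: (summand_free Hloc HC1 HC2 Hfull Hdl).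
apply: (summand_free Hloc HC2 HC1).
  move=> v; have [c1 [c2 [H1 [H2 E]]]] := Hfull v.
  by exists c2, c1; rewrite addrC.
by rewrite /zero_DLIP setIC.
Qed.
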